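(* For any $\beta>0$, the mixing time of the column dynamics $\mathcal M^{\mathrm{col}}_n$ is $O(n^3\log n)$.
   Context: Fix $\beta>0$ and an integer $n\ge1$. Configurations are $\eta\in\Omega_n=\{0,\dots,n\}^n$ with boundary values $\eta(0)=\eta(n+1)=0$, and the SOS Gibbs distribution is $\mu(\eta)\propto\exp\{-\beta\sum_{i=1}^{n+1}|\eta(i-1)-\eta(i)|\}$. The column dynamics $\mathcal M^{\mathrm{col}}_n$ is the Markov chain on $\Omega_n$ that, from $\eta$, picks $i\in\{1,\dots,n\}$ uniformly at random and replaces $\eta(i)$ by $j\in\{0,\dots,n\}$ with probability proportional to $\mu(\eta^j)$, where $\eta^j$ is $\eta$ with $\eta(i)$ replaced by $j$. Mixing time: $\tau^{\mathrm{mix}}=\min\{t:\|\nu_t^\xi-\mu\|_{TV}\le 1/(2e)\ \forall\xi\in\Omega_n\}$, with $\nu_t^\xi$ the law at time $t$ started at $\xi$. *)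

(* Defs.v *)
From HB Require Import structures.
From mathcomp Require Import all_boot all_order all_algebra.
From mathcomp Require Import all_classical all_reals all_analysis.
Set Implicit Arguments. Unset Strict Implicit. Unset Printing Implicit Defensive.
Import Order.TTheory GRing.Theory Num.Theory.
Local Open Scope ring_scope.

Section SOS.
Variable R : realType.

(* Omega_n = {0,...,n}^n : eta(i) for i = 1..n is stored at index i-1 : 'I_n *)
Definition config (n : nat) := {ffun 'I_n -> 'I_n.+1}.

(* height at column k in {0,...,n+1}, with boundary eta(0) = eta(n+1) = 0 *)
Definition ht (n : nat) (eta : config n) (k : nat) : nat :=
  if k is k'.+1 then
    (if @insub nat (fun m => m < n)%N 'I_n k' is Some i then val (eta i) else 0%N)
  else 0%N.

Definition energy (n : nat) (eta : config n) : R :=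
  \sum_(1 <= k < n.+2) `| (ht eta k.-1)%:R - (ht eta k)%:R |.

Definition weight (beta : R) (n : nat) (eta : config n) : R :=
  expR (- (beta * energy eta)).

Definition gibbs (beta : R) (n : nat) (eta : config n) : R :=
  weight beta eta / \sum_(xi : config n) weight beta xi.

Definition update (n : nat) (eta : config n) (i : 'I_n) (j : 'I_n.+1) : config n :=
  [ffun k => if k == i then j else eta k].

Definition Pcol (beta : R) (n : nat) (eta eta' : config n) : R :=
  n%:R^-1 * \sum_(i : 'I_n) \sum_(j : 'I_n.+1)
    (if eta' == update eta i j then
       weight beta (update eta i j) /
       \sum_(j' : 'I_n.+1) weight beta (update eta i j')
     else 0).

Fixpoint law (beta : R) (n : nat) (t : nat) (xi : config n) : config n -> R :=
  match t with
  | 0%N => fun eta => if eta == xi then 1 else 0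
  | t'.+1 => fun eta' => \sum_(eta : config n) law beta t' xi eta * Pcol beta eta eta'
  end.

Definition tv_dist (n : nat) (p q : config n -> R) : R :=
  2^-1 * \sum_(eta : config n) `| p eta - q eta |.

Definition mixed (beta : R) (n t : nat) : Prop :=
  forall xi : config n, tv_dist (law beta t xi) (@gibbs beta n) <= (2 * expR 1)^-1.

Definition is_mixing_time (beta : R) (n t : nat) : Prop :=
  mixed beta n t /\ forall s : nat, (s < t)%N -> ~ mixed beta n s.

End SOS.

(* Main.v *)
Require Import Defs.
From HB Require Import structures.
From mathcomp Require Import all_boot all_order all_algebra.
From mathcomp Require Import all_classical all_reals all_analysis.
From mathcomp Require Import ring lra zify.
From Stdlib Require Import Lia.
Import Order.TTheory GRing.Theory Num.Theory.
Local Open Scope ring_scope.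
Set Implicit Arguments. Unset Strict Implicit. Unset Printing Implicit Defensive.

Lemma G_ge0 (R : realType) (r P Q : R) : 0 <= r <= 1 -> 0 <= P <= r -> 0 <= Q <= r ->
  0 <= r*(1-r)*(P+Q) + r*P^+2 + Q^+2 - (3-r)*P*Q.
Proof.
move=> /andP[r0 r1] /andP[P0 Pr] /andP[Q0 Qr].
have e : r*(1-r)*(P+Q) + r*P^+2 + Q^+2 - (3-r)*P*Q =
  (1-r)*(P*(r-Q) + Q*(r-P)) + (Q-P)*(Q-r*P) by ring.
rewrite e.
have h1 : 0 <= (1-r)*(P*(r-Q) + Q*(r-P)) by apply: mulr_ge0; [lra| apply: addr_ge0; apply: mulr_ge0; lra].
case: (lerP P Q) => hPQ.
  apply: addr_ge0 => //; apply: mulr_ge0; nra.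
case: (lerP (r*P) Q) => hrP.
  have : (P-Q)*(Q-r*P) <= (1-r)*(P*(r-Q)) by nra.
  have : 0 <= (1-r)*(Q*(r-P)) by apply: mulr_ge0; nra.
  nra.
apply: addr_ge0 => //; nra.
Qed.
Lemma caseI (R : realType) (r mm t K T U B V P Q : R) : 0 <= r < 1 -> 0 <= mm -> 0 <= t -> 0 <= K ->
  0 <= P <= r -> 0 <= Q <= r -> 0 <= T -> 0 <= B ->
  (1-r)*T = r - P -> (1-r)*U = T - t*P -> (1-r)*B = r - Q -> (1-r)*V = B - K*Q ->
  2*(1-r)*((mm+1+T)*V + B*(mm*(mm+1)/2 + mm*T + U)) <= ((mm+1+T)+B)*(r*(mm+1+T)+B).
Proof.
move=> /andP[r0 r1] m0 t0 K0 PP QQ T0 B0 hT hU hB hV.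
rewrite -subr_ge0.
have -> : ((mm+1+T)+B)*(r*(mm+1+T)+B) - 2*(1-r)*((mm+1+T)*V + B*(mm*(mm+1)/2 + mm*T + U))
  = ((mm+1+T)+B)*(r*(mm+1+T)+B) - 2*(mm+1+T)*((1-r)*V) - 2*B*((1-r)*(mm*(mm+1)/2 + mm*T) + (1-r)*U)
  by field; lra.
rewrite hV hU.
have hJ : 0 <= (B-T)*(B-r*T) + 2*T*Q.
  have hG := @G_ge0 R r P Q.
  have : (1-r)^+2 * ((B-T)*(B-r*T) + 2*T*Q) = r*(1-r)*(P+Q) + r*P^+2 + Q^+2 - (3-r)*P*Q.
    have eP : P = r - (1-r)*T by lra.
    have eQ : Q = r - (1-r)*B by lra.
    rewrite eP eQ; ring.
  move=> e.
  have : 0 <= (1-r)^+2 * ((B-T)*(B-r*T) + 2*T*Q).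
    rewrite e; apply: hG; lra.
  rewrite pmulr_rge0 //; apply: exprn_gt0; lra.
have eQ : Q = r - (1-r)*B by lra.
have eP : P = r - (1-r)*T by lra.
have -> : ((mm+1+T)+B)*(r*(mm+1+T)+B) - 2*(mm+1+T)*(B - K*Q) - 2*B*((1-r)*(mm*(mm+1)/2 + mm*T) + (T - t*P))
  = (mm+1)^+2*Q + 2*mm*T*Q + ((B-T)*(B-r*T) + 2*T*Q) + 2*(mm+1+T)*K*Q + 2*B*t*P.
  by subst P Q; field; lra.
have : 0 <= (mm+1)^+2*Q by apply: mulr_ge0; [apply: sqr_ge0| lra].
have : 0 <= mm*T*Q by apply: mulr_ge0; [apply: mulr_ge0|]; lra.
have : 0 <= (mm+1+T)*K*Q by apply: mulr_ge0; [apply: mulr_ge0|]; lra.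
have : 0 <= B*t*P by apply: mulr_ge0; [apply: mulr_ge0|]; lra.
lra.
Qed.
Lemma caseII (R : realType) (r pp M K Ta Ua T U P Q : R) : 0 <= r < 1 -> 0 <= pp -> 0 <= M -> 0 <= K ->
  0 <= P <= r -> 0 <= Q <= r -> 0 <= Ta -> 0 <= T ->
  (1-r)*Ta = r - P -> (1-r)*Ua = Ta - M*P -> (1-r)*T = r - Q -> (1-r)*U = T - K*Q ->
  2*(1-r)*((1+Ta)*(pp*(pp+1)/2 + pp*T + U) + (pp+T)*Ua) <= ((1+Ta)+(pp+T))*(r*(1+Ta)+(pp+T)).
Proof.
move=> /andP[r0 r1] p0 M0 K0 PP QQ Ta0 T0 hTa hUa hT hU.
rewrite -subr_ge0.
have -> : ((1+Ta)+(pp+T))*(r*(1+Ta)+(pp+T)) - 2*(1-r)*((1+Ta)*(pp*(pp+1)/2 + pp*T + U) + (pp+T)*Ua)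
  = ((1+Ta)+(pp+T))*(r*(1+Ta)+(pp+T)) - 2*(1+Ta)*((1-r)*(pp*(pp+1)/2 + pp*T) + (1-r)*U) - 2*(pp+T)*((1-r)*Ua)
  by field; lra.
rewrite hU hUa.
have hJ : 0 <= r*(1+Ta)^+2 - (3-r)*(1+Ta)*T + T^+2 + 2*T.
  have hG := @G_ge0 R r P Q.
  have : (1-r)^+2 * (r*(1+Ta)^+2 - (3-r)*(1+Ta)*T + T^+2 + 2*T) =
     (r*(1-r)*(P+Q) + r*P^+2 + Q^+2 - (3-r)*P*Q) + (1-r)^+2*Q.
    have eP : P = r - (1-r)*Ta by lra.
    have eQ : Q = r - (1-r)*T by lra.
    by subst P Q; ring.
  move=> e.
  have : 0 <= (1-r)^+2 * (r*(1+Ta)^+2 - (3-r)*(1+Ta)*T + T^+2 + 2*T).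
    rewrite e; apply: addr_ge0; first by apply: hG; lra.
    apply: mulr_ge0; [apply: sqr_ge0|]; lra.
  rewrite pmulr_rge0 //; apply: exprn_gt0; lra.
have eQ : Q = r - (1-r)*T by lra.
have eP : P = r - (1-r)*Ta by lra.
have -> : ((1+Ta)+(pp+T))*(r*(1+Ta)+(pp+T)) - 2*(1+Ta)*((1-r)*(pp*(pp+1)/2 + pp*T) + (T - K*Q)) - 2*(pp+T)*(Ta - M*P)
  = (r*(1+Ta)^+2 - (3-r)*(1+Ta)*T + T^+2 + 2*T) + P*pp^+2 + 2*P*pp + 2*P*pp*T + 2*(1+Ta)*K*Q + 2*(pp+T)*M*P.
  by subst P Q; field; lra.
have : 0 <= P*pp^+2 by apply: mulr_ge0; [lra| apply: sqr_ge0].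
have : 0 <= P*pp*T by apply: mulr_ge0; [apply: mulr_ge0|]; lra.
have : 0 <= (1+Ta)*K*Q by apply: mulr_ge0; [apply: mulr_ge0|]; lra.
have : 0 <= (pp+T)*M*P by apply: mulr_ge0; [apply: mulr_ge0|]; lra.
have : 0 <= P*pp by apply: mulr_ge0; lra.
lra.
Qed.

Definition Tg (R : realType) (r : R) (t : nat) : R := \sum_(1 <= k < t.+1) r ^+ k.
Definition Ug (R : realType) (r : R) (t : nat) : R := \sum_(1 <= k < t.+1) k%:R * r ^+ k.

Lemma TgS (R : realType) (r : R) t : Tg r t.+1 = Tg r t + r ^+ t.+1.
Proof. by rewrite /Tg big_nat_recr. Qed.
Lemma UgS (R : realType) (r : R) t : Ug r t.+1 = Ug r t + t.+1%:R * r ^+ t.+1.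
Proof. by rewrite /Ug big_nat_recr. Qed.

Lemma Tg0 (R : realType) (r : R) : Tg r 0 = 0.
Proof. by rewrite /Tg big_geq. Qed.
Lemma Ug0 (R : realType) (r : R) : Ug r 0 = 0.
Proof. by rewrite /Ug big_geq. Qed.

Lemma Tg_eq (R : realType) (r : R) t : (1 - r) * Tg r t = r - r ^+ t.+1.
Proof.
elim: t => [|t IH]; first by rewrite /Tg big_geq // mulr0 expr1 subrr.
rewrite TgS mulrDr IH [r ^+ t.+2]exprS; ring.
Qed.

Lemma Ug_eq (R : realType) (r : R) t : (1 - r) * Ug r t = Tg r t - t%:R * r ^+ t.+1.
Proof.
elim: t => [|t IH]; first by rewrite /Ug /Tg !big_geq // mulr0 mul0r subrr.
rewrite UgS TgS mulrDr IH [r ^+ t.+2]exprS -natr1; ring.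
Qed.

Lemma Tg_ge0 (R : realType) (r : R) t : 0 <= r -> 0 <= Tg r t.
Proof. by move=> r0; apply: sumr_ge0 => k _; apply: exprn_ge0. Qed.

Lemma sum_id (R : realType) k : 2 * \sum_(0 <= d < k) (d%:R : R) = (k * k.-1)%:R.
Proof.
elim: k => [|k IH]; first by rewrite big_geq // mulr0.
rewrite big_nat_recr //= mulrDr IH; case: k {IH} => [|k] /=; first by rewrite mulr0 add0r.
rewrite -natrM -natrD; congr (_%:R); lia.
Qed.

Lemma flat_geo1 (R : realType) (r : R) m t :
  \sum_(0 <= d < m.+1 + t) r ^+ (d - m) = m.+1%:R + Tg r t.
Proof.
elim: t => [|t IH].
  rewrite addn0 Tg0 addr0.
  rewrite (eq_big_nat _ _ (F2 := fun _ => 1)); last first.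
    by move=> d /andP[_ hd]; have -> : (d - m = 0)%N by lia.
  by rewrite sumr_const_nat subn0.
rewrite addnS big_nat_recr // IH TgS; have -> : (m.+1 + t - m = t.+1)%N by lia.
by rewrite addrA.
Qed.

Lemma flat_geo2 (R : realType) (r : R) m t :
  \sum_(0 <= d < m.+1 + t) d%:R * r ^+ (d - m) =
    (m * m.+1)%:R / 2 + m%:R * Tg r t + Ug r t.
Proof.
elim: t => [|t IH].
  rewrite addn0 Tg0 Ug0 mulr0 !addr0.
  rewrite (eq_big_nat _ _ (F2 := fun d => d%:R)); last first.
    move=> d /andP[_ hd]; have e : (d - m = 0)%N by lia.
    by rewrite e expr0 mulr1.
  have := sum_id R m.+1 => /= e. rewrite mulnC -e; field; lra.
rewrite addnS big_nat_recr // IH TgS UgS; have -> : (m.+1 + t - m = t.+1)%N by lia.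
have -> : ((m.+1 + t)%:R : R) = m%:R + t.+1%:R by rewrite -natrD; congr _%:R; lia.
rewrite /=; ring.
Qed.

Definition dst (x y : nat) : nat := ((x - y) + (y - x))%N.
Definition lw (R : realType) (q : R) (a b j : nat) : R := q ^+ (dst a j + dst j b).

Lemma lower_rev (R : realType) (F : nat -> R) a :
  \sum_(0 <= j < a.+1) F j = \sum_(0 <= d < a.+1) F (a - d)%N.
Proof.
rewrite big_nat_rev; apply: eq_big_nat => d /andP[_ hd].
by congr F; lia.
Qed.

Lemma upper_shift (R : realType) (F : nat -> R) a n : (a <= n)%N ->
  \sum_(a.+1 <= j < n.+1) F j = \sum_(1 <= d < (n - a).+1) F (a + d)%N.
Proof.
move=> han; rewrite -[a.+1]add1n big_addn.
have -> : (n.+1 - a = (n - a).+1)%N by lia.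
by apply: eq_big_nat => d _; rewrite addnC.
Qed.

Lemma pow_split (R : realType) (q : R) m x : q ^+ (m + 2 * x) = q ^+ m * (q ^+ 2) ^+ x.
Proof. by rewrite exprD exprM. Qed.

Lemma rpow_le (R : realType) (r : R) k : 0 <= r <= 1 -> 0 <= r ^+ k.+1 <= r.
Proof.
move=> /andP[r0 r1]; apply/andP; split; first exact: exprn_ge0.
rewrite exprS; apply: ler_piMr => //; exact: exprn_ile1.
Qed.

Lemma step_core (R : realType) (q : R) (a b n : nat) :
  0 < q -> q < 1 -> (a < n)%N -> (b <= n)%N ->
  2 * (1 - q ^+ 2) *
    ((\sum_(0 <= j < a.+1) lw q a b j) * (\sum_(a.+1 <= j < n.+1) (j - a)%:R * lw q a b j)
     + (\sum_(a.+1 <= j < n.+1) lw q a b j) * (\sum_(0 <= j < a.+1) (a - j)%:R * lw q a b j))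
  <= ((\sum_(0 <= j < a.+1) lw q a b j) + (\sum_(a.+1 <= j < n.+1) lw q a b j)) *
     (q ^+ 2 * (\sum_(0 <= j < a.+1) lw q a b j) + (\sum_(a.+1 <= j < n.+1) lw q a b j)).
Proof.
move=> q0 q1 han hbn.
set r := q ^+ 2.
have r0 : 0 <= r by rewrite /r; apply: exprn_ge0; lra.
have r1 : r < 1 by rewrite /r expr2; nra.
have rr : 0 <= r <= 1 by apply/andP; split; lra.
have hK : (a <= n)%N by lia.
rewrite (lower_rev (fun j => lw q a b j)) (lower_rev (fun j => (a - j)%:R * lw q a b j)).
rewrite (upper_shift (fun j => lw q a b j) hK) (upper_shift (fun j => (j - a)%:R * lw q a b j) hK).
set K := (n - a)%N.
have e1 : \sum_(0 <= d < a.+1) (a - (a - d))%:R * lw q a b (a - d) =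
          \sum_(0 <= d < a.+1) d%:R * lw q a b (a - d).
  by apply: eq_big_nat => d /andP[_ hd]; congr (_%:R * _); lia.
have e2 : \sum_(1 <= d < K.+1) (a + d - a)%:R * lw q a b (a + d) =
          \sum_(1 <= d < K.+1) d%:R * lw q a b (a + d).
  by apply: eq_big_nat => d _; congr (_%:R * _); lia.
rewrite e1 e2 => {e1 e2}.
have [hab|hab] : (b <= a)%N \/ (a < b)%N by lia.
-
  pose m := (a - b)%N.
  have ev : forall d, (d < a.+1)%N -> lw q a b (a - d) = q ^+ m * r ^+ (d - m).
    by move=> d hd; rewrite /lw -pow_split; congr (_ ^+ _); rewrite /dst /m; lia.
  have eu : forall d, lw q a b (a + d) = q ^+ m * r ^+ d.
    by move=> d; rewrite /lw -pow_split; congr (_ ^+ _); rewrite /dst /m; lia.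
  have hA : \sum_(0 <= d < a.+1) lw q a b (a - d) = q ^+ m * (m.+1%:R + Tg r b).
    rewrite -flat_geo1 mulr_sumr; have -> : (m.+1 + b = a.+1)%N by rewrite /m; lia.
    by apply: eq_big_nat => d /andP[_ hd]; rewrite ev.
  have hSv : \sum_(0 <= d < a.+1) d%:R * lw q a b (a - d) =
             q ^+ m * ((m * m.+1)%:R / 2 + m%:R * Tg r b + Ug r b).
    rewrite -flat_geo2 mulr_sumr; have -> : (m.+1 + b = a.+1)%N by rewrite /m; lia.
    by apply: eq_big_nat => d /andP[_ hd]; rewrite ev // mulrCA.
  have hB : \sum_(1 <= d < K.+1) lw q a b (a + d) = q ^+ m * Tg r K.
    by rewrite /Tg mulr_sumr; apply: eq_big_nat => d _; rewrite eu.
  have hSu : \sum_(1 <= d < K.+1) d%:R * lw q a b (a + d) = q ^+ m * Ug r K.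
    by rewrite /Ug mulr_sumr; apply: eq_big_nat => d _; rewrite eu mulrCA.
  have hm1 : (m.+1%:R : R) = m%:R + 1 by rewrite -natr1.
  rewrite hA hSv hB hSu natrM hm1.
  have H := @caseI R r m%:R b%:R K%:R (Tg r b) (Ug r b) (Tg r K) (Ug r K) (r ^+ b.+1) (r ^+ K.+1).
  have {}H := H ltac:(lra) (ler0n _ _) (ler0n _ _) (ler0n _ _) (rpow_le _ rr) (rpow_le _ rr)
    (Tg_ge0 _ r0) (Tg_ge0 _ r0) (Tg_eq _ _) (Ug_eq _ _) (Tg_eq _ _) (Ug_eq _ _).
  set s := q ^+ m.
  have s2 : 0 <= s * s by apply: mulr_ge0; rewrite /s; apply: exprn_ge0; lra.
  move: H; set T := Tg r b; set U := Ug r b; set B := Tg r K; set V := Ug r K.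
  move: (m%:R : R) => mm H.
  have H2 := ler_wpM2l s2 H.
  have E1 : s * s * (2 * (1 - r) * ((mm + 1 + T) * V + B * (mm * (mm + 1) / 2 + mm * T + U))) =
    2 * (1 - r) * (s * (mm + 1 + T) * (s * V) + s * B * (s * (mm * (mm + 1) / 2 + mm * T + U))) by ring.
  have E2 : s * s * ((mm + 1 + T + B) * (r * (mm + 1 + T) + B)) =
    (s * (mm + 1 + T) + s * B) * (r * (s * (mm + 1 + T)) + s * B) by ring.
  by rewrite -E1 -E2.
-
  pose p := (b - a)%N.
  have hpK : (p <= K)%N by rewrite /p /K; lia.
  have ev : forall d, (d < a.+1)%N -> lw q a b (a - d) = q ^+ p * r ^+ d.
    by move=> d hd; rewrite /lw -pow_split; congr (_ ^+ _); rewrite /dst /p; lia.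
  have eu : forall d, lw q a b (a + d) = q ^+ p * r ^+ (d - p).
    by move=> d; rewrite /lw -pow_split; congr (_ ^+ _); rewrite /dst /p; lia.
  have hA : \sum_(0 <= d < a.+1) lw q a b (a - d) = q ^+ p * (1 + Tg r a).
    rewrite big_ltn // /Tg mulrDr mulr_sumr ev // expr0 mulr1; congr (_ + _).
    by apply: eq_big_nat => d /andP[_ hd]; rewrite ev.
  have hSv : \sum_(0 <= d < a.+1) d%:R * lw q a b (a - d) = q ^+ p * Ug r a.
    rewrite big_ltn // /Ug mul0r add0r mulr_sumr.
    by apply: eq_big_nat => d /andP[_ hd]; rewrite ev // mulrCA.
  have hKp : (p.+1 + (K - p) = K.+1)%N by lia.
  have hB : \sum_(1 <= d < K.+1) lw q a b (a + d) = q ^+ p * (p%:R + Tg r (K - p)).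
    have := flat_geo1 r p (K - p); rewrite hKp big_ltn // sub0n expr0 -natr1 => e.
    have -> : p%:R + Tg r (K - p) = \sum_(1 <= d < K.+1) r ^+ (d - p).
      by apply: (addIr 1); rewrite [RHS]addrC e; ring.
    by rewrite mulr_sumr; apply: eq_big_nat => d _; rewrite eu.
  have hSu : \sum_(1 <= d < K.+1) d%:R * lw q a b (a + d) =
             q ^+ p * ((p * p.+1)%:R / 2 + p%:R * Tg r (K - p) + Ug r (K - p)).
    have := flat_geo2 r p (K - p); rewrite hKp big_ltn // mul0r add0r => <-.
    by rewrite mulr_sumr; apply: eq_big_nat => d _; rewrite eu mulrCA.
  have hp1 : (p.+1%:R : R) = p%:R + 1 by rewrite -natr1.
  rewrite hA hSv hB hSu natrM hp1.
  have H := @caseII R r p%:R a%:R (K - p)%:R (Tg r a) (Ug r a) (Tg r (K - p)) (Ug r (K - p))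
     (r ^+ a.+1) (r ^+ (K - p).+1).
  have {}H := H ltac:(lra) (ler0n _ _) (ler0n _ _) (ler0n _ _) (rpow_le _ rr) (rpow_le _ rr)
    (Tg_ge0 _ r0) (Tg_ge0 _ r0) (Tg_eq _ _) (Ug_eq _ _) (Tg_eq _ _) (Ug_eq _ _).
  set s := q ^+ p.
  have s2 : 0 <= s * s by apply: mulr_ge0; rewrite /s; apply: exprn_ge0; lra.
  move: H; set Ta := Tg r a; set Ua := Ug r a; set T := Tg r (K - p); set U := Ug r (K - p).
  move: (p%:R : R) => pp H.
  have H2 := ler_wpM2l s2 H.
  have E1 : s * s * (2 * (1 - r) * ((1 + Ta) * (pp * (pp + 1) / 2 + pp * T + U) + (pp + T) * Ua)) =
    2 * (1 - r) * (s * (1 + Ta) * (s * (pp * (pp + 1) / 2 + pp * T + U)) + s * (pp + T) * (s * Ua)) by ring.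
  have E2 : s * s * ((1 + Ta + (pp + T)) * (r * (1 + Ta) + (pp + T))) =
    (s * (1 + Ta) + s * (pp + T)) * (r * (s * (1 + Ta)) + s * (pp + T)) by ring.
  by rewrite -E1 -E2.
Qed.

Lemma antisym (R : realType) (s : seq nat) (h g : nat -> R) :
  \sum_(i <- s) \sum_(j <- s) h i * h j * (g i - g j) = 0.
Proof.
set X := LHS.
have : X = - X.
  rewrite {1}/X exchange_big /X -sumrN; apply: eq_bigr => j _.
  rewrite -sumrN; apply: eq_bigr => i _; ring.
lra.
Qed.

Lemma lw_gt0 (R : realType) (q : R) a b j : 0 < q -> 0 < lw q a b j.
Proof. by move=> q0; apply: exprn_gt0. Qed.

Lemma lw_sym (R : realType) (q : R) a b j : lw q a b j = lw q b a j.
Proof. by rewrite /lw /dst; congr (_ ^+ _); lia. Qed.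

Lemma lw_shift (R : realType) (q : R) a b j :
  q * lw q a.+1 b j = (if (j <= a)%N then q ^+ 2 else 1) * lw q a b j.
Proof.
rewrite /lw; case: ifP => hj.
  rewrite -exprS -exprD; congr (_ ^+ _); rewrite /dst; lia.
rewrite mul1r -exprS; congr (_ ^+ _); move/negbT: hj; rewrite -ltnNge => hj.
rewrite /dst; lia.
Qed.

Definition avg (R : realType) (q : R) (n a b : nat) (g : nat -> R) : R :=
  (\sum_(0 <= j < n.+1) lw q a b j * g j) / (\sum_(0 <= j < n.+1) lw q a b j).

Lemma sum_lw_gt0 (R : realType) (q : R) n a b : 0 < q -> 0 < \sum_(0 <= j < n.+1) lw q a b j.
Proof.
move=> q0; rewrite big_ltn // ltr_wpDr //; last exact: lw_gt0.
by apply: sumr_ge0 => j _; apply/ltW/lw_gt0.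
Qed.

Lemma split_sum (R : realType) (F : nat -> R) a n : (a <= n)%N ->
  \sum_(0 <= j < n.+1) F j = \sum_(0 <= j < a.+1) F j + \sum_(a.+1 <= j < n.+1) F j.
Proof. by move=> h; rewrite (big_cat_nat _ (n := a.+1)). Qed.

Lemma step (R : realType) (q : R) (n a b : nat) (g : nat -> R) (c : R) :
  0 < q -> q < 1 -> (a < n)%N -> (b <= n)%N -> 0 <= c ->
  (forall i j, (i < n.+1)%N -> (j < n.+1)%N -> g i - g j <= c * (dst i j)%:R) ->
  avg q n a b g - avg q n a.+1 b g <= c / 2.
Proof.
move=> q0 q1 han hbn c0 Hg.
set r := q ^+ 2.
have r1 : r < 1 by rewrite /r expr2; nra.
have r0 : 0 <= r by rewrite /r; apply: exprn_ge0; lra.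
pose w := lw q a b. pose w' := lw q a.+1 b.
pose cc := fun j : nat => if (j <= a)%N then r else 1.
have hw' : forall j, q * w' j = cc j * w j by move=> j; exact: lw_shift.
have Zp := sum_lw_gt0 n a b q0.
have Z'p := sum_lw_gt0 n a.+1 b q0.
rewrite /avg -/w -/w'.
set Z := \sum_(0 <= j < n.+1) w j.
set Z' := \sum_(0 <= j < n.+1) w' j.
have hN : (\sum_(0 <= j < n.+1) w j * g j) / Z - (\sum_(0 <= j < n.+1) w' j * g j) / Z' =
   (\sum_(0 <= i < n.+1) \sum_(0 <= j < n.+1) w i * (cc j * w j) * (g i - g j)) / (Z * (q * Z')).
  have -> : \sum_(0 <= i < n.+1) \sum_(0 <= j < n.+1) w i * (cc j * w j) * (g i - g j) =
     q * ((\sum_(0 <= j < n.+1) w j * g j) * Z' - Z * (\sum_(0 <= j < n.+1) w' j * g j)).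
    rewrite [X in q * (X - _)]mulr_suml [X in q * (_ - X)]mulr_suml -sumrB mulr_sumr.
    apply: eq_bigr => i _.
    rewrite /Z' [X in q * (X - _)]mulr_sumr [X in q * (_ - X)]mulr_sumr -sumrB mulr_sumr.
    apply: eq_bigr => j _.
    rewrite -hw'; ring.
  have hZ : Z != 0 by rewrite gt_eqF.
  have hZ' : Z' != 0 by rewrite gt_eqF.
  have hq : q != 0 by rewrite gt_eqF.
  by field; rewrite hZ hZ' hq.
rewrite hN.
have hK : (a <= n)%N by lia.
set A := \sum_(0 <= j < a.+1) w j.
set B := \sum_(a.+1 <= j < n.+1) w j.
set Su := \sum_(a.+1 <= j < n.+1) (j - a)%:R * w j.
set Sv := \sum_(0 <= j < a.+1) (a - j)%:R * w j.
have hZ : Z = A + B by rewrite /Z (split_sum _ hK).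
have hqZ : q * Z' = r * A + B.
  rewrite /Z' mulr_sumr (split_sum _ hK) /A /B mulr_sumr; congr (_ + _).
    by apply: eq_big_nat => j /andP[_ hj]; rewrite hw' /cc ifT.
  by apply: eq_big_nat => j /andP[hj _]; rewrite hw' /cc ifF ?mul1r //; apply/negbTE; rewrite -ltnNge.
set LU := \sum_(0 <= i < a.+1) \sum_(a.+1 <= j < n.+1) w i * w j * (g i - g j).
have hNe : \sum_(0 <= i < n.+1) \sum_(0 <= j < n.+1) w i * (cc j * w j) * (g i - g j) = (1 - r) * LU.
  pose F := fun i j => w i * (cc j * w j) * (g i - g j).
  have e1 : forall i, \sum_(0 <= j < n.+1) F i j =
      r * \sum_(0 <= j < a.+1) w i * w j * (g i - g j) + \sum_(a.+1 <= j < n.+1) w i * w j * (g i - g j).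
    move=> i; rewrite (split_sum _ hK) mulr_sumr; congr (_ + _).
      by apply: eq_big_nat => j /andP[_ hj]; rewrite /F /cc ifT //; ring.
    apply: eq_big_nat => j /andP[hj _]; rewrite /F /cc ifF; first ring.
    by apply/negbTE; rewrite -ltnNge.
  rewrite -/(\sum_(0 <= i < n.+1) \sum_(0 <= j < n.+1) F i j).
  under eq_bigr do rewrite e1.
  rewrite (split_sum _ hK) !big_split /= -!mulr_sumr.
  rewrite /index_iota !subn0 antisym.
  have -> : \sum_(i <- iota a.+1 (n.+1 - a.+1)) \sum_(j <- iota a.+1 (n.+1 - a.+1)) w i * w j * (g i - g j) = 0.
    by apply: antisym.
  have -> : \sum_(i <- iota a.+1 (n.+1 - a.+1)) \sum_(j <- iota 0 a.+1) w i * w j * (g i - g j) = - LU.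
    rewrite exchange_big /LU /index_iota subn0 -sumrN; apply: eq_bigr => i _.
    rewrite -sumrN; apply: eq_bigr => j _; ring.
  rewrite /LU /index_iota subn0; ring.
have hLU : LU <= c * (A * Su + B * Sv).
  have -> : A * Su + B * Sv =
     \sum_(0 <= i < a.+1) \sum_(a.+1 <= j < n.+1) w i * w j * (j - i)%:R.
    rewrite /A /Sv mulr_suml mulr_sumr -big_split; apply: eq_big_nat => i /andP[_ hi].
    rewrite /Su /B mulr_sumr mulr_suml -big_split; apply: eq_big_nat => j /andP[hj _].
    have -> : ((j - i)%:R : R) = (j - a)%:R + (a - i)%:R by rewrite -natrD; congr _%:R; lia.
    rewrite /=; ring.
  rewrite mulr_sumr; apply: ler_sum_nat => i /andP[_ hi].
  rewrite mulr_sumr; apply: ler_sum_nat => j /andP[hj hjn].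
  have hw0 : 0 <= w i * w j by apply: mulr_ge0; apply/ltW/lw_gt0.
  have := Hg i j ltac:(lia) hjn; rewrite /dst.
  have -> : ((i - j) + (j - i) = j - i)%N by lia.
  move=> h; rewrite mulrCA; apply: ler_wpM2l => //.
have hcore := @step_core R q a b n q0 q1 han hbn.
rewrite -/w -/A -/B -/Su -/Sv -/r in hcore.
rewrite hNe hZ hqZ ler_pdivrMr; last first.
  apply: mulr_gt0; first by rewrite -hZ.
  by rewrite -hqZ; apply: mulr_gt0.
have h1 : (1 - r) * LU <= (1 - r) * (c * (A * Su + B * Sv)) by apply: ler_wpM2l => //; lra.
apply: (le_trans h1).
have h2 := ler_wpM2l c0 hcore.
nra.
Qed.

Lemma avgN (R : realType) (q : R) n a b (g : nat -> R) :
  avg q n a b (fun j => - g j) = - avg q n a b g.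
Proof.
rewrite /avg -mulNr; congr (_ * _); rewrite -sumrN; apply: eq_bigr => j _; ring.
Qed.

Lemma avg_sym (R : realType) (q : R) n a b (g : nat -> R) : avg q n a b g = avg q n b a g.
Proof.
by rewrite /avg; congr (_ / _); apply: eq_bigr => j _; rewrite lw_sym.
Qed.

Lemma dst_sym i j : dst i j = dst j i.
Proof. by rewrite /dst addnC. Qed.

Lemma step_both (R : realType) (q : R) (n a b : nat) (g : nat -> R) (c : R) :
  0 < q -> q < 1 -> (a < n)%N -> (b <= n)%N -> 0 <= c ->
  (forall i j, (i < n.+1)%N -> (j < n.+1)%N -> g i - g j <= c * (dst i j)%:R) ->
  avg q n a b g - avg q n a.+1 b g <= c / 2 /\ avg q n a.+1 b g - avg q n a b g <= c / 2.
Proof.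
move=> q0 q1 han hbn c0 Hg; split; first exact: step.
have := @step R q n a b (fun j => - g j) c q0 q1 han hbn c0.
rewrite !avgN => h; have := h _; rewrite opprK addrC; apply.
by move=> i j hi hj; rewrite opprK addrC dst_sym; apply: Hg.
Qed.

Lemma lip_k (R : realType) (q : R) (n b : nat) (g : nat -> R) (c : R) :
  0 < q -> q < 1 -> (b <= n)%N -> 0 <= c ->
  (forall i j, (i < n.+1)%N -> (j < n.+1)%N -> g i - g j <= c * (dst i j)%:R) ->
  forall k a, (a + k <= n)%N ->
  avg q n a b g - avg q n (a + k) b g <= c * k%:R / 2 /\
  avg q n (a + k) b g - avg q n a b g <= c * k%:R / 2.
Proof.
move=> q0 q1 hbn c0 Hg; elim=> [|k IH] a hak.
  by rewrite addn0 subrr mulr0 mul0r; split.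
have [h1 h2] := IH a ltac:(lia).
have [h3 h4] := @step_both R q n (a + k) b g c q0 q1 ltac:(lia) hbn c0 Hg.
rewrite addnS -natr1; split; lra.
Qed.

Lemma lipA (R : realType) (q : R) (n a a' b : nat) (g : nat -> R) (c : R) :
  0 < q -> q < 1 -> (a <= n)%N -> (a' <= n)%N -> (b <= n)%N -> 0 <= c ->
  (forall i j, (i < n.+1)%N -> (j < n.+1)%N -> g i - g j <= c * (dst i j)%:R) ->
  avg q n a b g - avg q n a' b g <= c * (dst a a')%:R / 2.
Proof.
move=> q0 q1 ha ha' hb c0 Hg.
have H := lip_k q0 q1 hb c0 Hg.
have [haa|haa] : (a <= a')%N \/ (a' < a)%N by lia.
  have [h1 _] := H (a' - a)%N a ltac:(lia).
  have e : (a + (a' - a) = a')%N by lia.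
  have e2 : dst a a' = (a' - a)%N by rewrite /dst; lia.
  by rewrite e in h1; rewrite e2.
have [_ h2] := H (a - a')%N a' ltac:(lia).
have e : (a' + (a - a') = a)%N by lia.
have e2 : dst a a' = (a - a')%N by rewrite /dst; lia.
by rewrite e in h2; rewrite e2.
Qed.

Lemma avg_lip (R : realType) (q : R) (n a a' b b' : nat) (g : nat -> R) (c : R) :
  0 < q -> q < 1 -> (a <= n)%N -> (a' <= n)%N -> (b <= n)%N -> (b' <= n)%N -> 0 <= c ->
  (forall i j, (i < n.+1)%N -> (j < n.+1)%N -> g i - g j <= c * (dst i j)%:R) ->
  avg q n a b g - avg q n a' b' g <= c * ((dst a a')%:R + (dst b b')%:R) / 2.
Proof.
move=> q0 q1 ha ha' hb hb' c0 Hg.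
have h1 := lipA q0 q1 ha ha' hb c0 Hg.
have h2 := lipA (b := a') q0 q1 hb hb' ha' c0 Hg.
rewrite (avg_sym q n b a') (avg_sym q n b' a') in h2.
rewrite mulrDr mulrDl; lra.
Qed.

Lemma ht_update n (eta : config n) (i : 'I_n) (j : 'I_n.+1) k :
  ht (update eta i j) k = if k == i.+1 then val j else ht eta k.
Proof.
case: k => [|k] //=; rewrite eqSS.
case: insubP => [u hu ev|hn].
  rewrite /update ffunE; have -> : (u == i) = (k == i) by rewrite -ev.
  by case: (k == i).
have -> : (k == i) = false; last by [].
by apply/negbTE; apply/eqP => e; move: hn; rewrite e ltn_ord.
Qed.

Lemma ht_col n (eta : config n) (i : 'I_n) : ht eta i.+1 = eta i.
Proof. by rewrite /= valK. Qed.

Lemma ht_le n (eta : config n) k : (ht eta k <= n)%N.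
Proof.
case: k => [|k] //=; case: insubP => [u _ _|_] //.
by have := ltn_ord (eta u); rewrite ltnS.
Qed.

Lemma ht0 n (eta : config n) : ht eta 0 = 0%N.
Proof. by []. Qed.

Lemma ht_out n (eta : config n) k : (n < k)%N -> ht eta k = 0%N.
Proof.
case: k => [|k] //= hk; case: insubP => [u hu _|_] //.
by move: hu; rewrite ltnNge -ltnS hk.
Qed.

Lemma norm_nat (R : realType) x y : `|(x%:R : R) - y%:R| = (dst x y)%:R.
Proof.
have [h|h] : (x <= y)%N \/ (y < x)%N by lia.
  have -> : (x%:R : R) - y%:R = - (y - x)%:R by rewrite natrB //; ring.
  by rewrite normrN normr_nat /dst; congr _%:R; lia.
have -> : (x%:R : R) - y%:R = (x - y)%:R by rewrite natrB //; lia.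
by rewrite normr_nat /dst; congr _%:R; lia.
Qed.

Definition Fe (R : realType) n (eta : config n) (k : nat) : R :=
  `| (ht eta k.-1)%:R - (ht eta k)%:R |.

Definition Rest (R : realType) n (eta : config n) (i : 'I_n) : R :=
  \sum_(1 <= k < i.+1) Fe R eta k + \sum_(i.+3 <= k < n.+2) Fe R eta k.

Lemma energy_split (R : realType) n (eta : config n) (i : 'I_n) :
  energy R eta = Rest R eta i + Fe R eta i.+1 + Fe R eta i.+2.
Proof.
have hi := ltn_ord i.
rewrite /energy /Rest (big_cat_nat _ (n := i.+1)) //=; last by lia.
rewrite (@big_ltn _ _ _ i.+1); last by lia.
rewrite (@big_ltn _ _ _ i.+2); last by lia.
rewrite /Fe /=; ring.
Qed.

Lemma Rest_update (R : realType) n (eta : config n) (i : 'I_n) j :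
  Rest R (update eta i j) i = Rest R eta i.
Proof.
rewrite /Rest; congr (_ + _); apply: eq_big_nat => k /andP[h1 h2];
  rewrite /Fe !ht_update; (have -> : (k.-1 == i.+1) = false by apply/negbTE/eqP; lia);
  by have -> : (k == i.+1) = false by apply/negbTE/eqP; lia.
Qed.

Lemma FeS (R : realType) n (eta : config n) k :
  Fe R eta k.+1 = `|(ht eta k)%:R - (ht eta k.+1)%:R|.
Proof. by []. Qed.

Lemma ht_update_ne n (eta : config n) (i : 'I_n) (j : 'I_n.+1) k :
  k != i.+1 -> ht (update eta i j) k = ht eta k.
Proof. by move=> h; rewrite ht_update (negbTE h). Qed.

Lemma weight_update (R : realType) (beta : R) n (eta : config n) (i : 'I_n) (j : 'I_n.+1) :
  weight beta (update eta i j) =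
  expR (- (beta * Rest R eta i)) * lw (expR (- beta)) (ht eta i) (ht eta i.+2) j.
Proof.
rewrite /weight (energy_split _ _ i) Rest_update !FeS.
rewrite (ht_update_ne _ _ (k := i)); last by apply/eqP; lia.
rewrite (ht_update_ne _ _ (k := i.+2)); last by apply/eqP; lia.
rewrite ht_update eqxx !norm_nat -addrA -natrD.
rewrite mulrDr opprD expRD /lw -expRM_natl; congr (_ * _); congr expR; ring.
Qed.

Definition Pop (R : realType) (beta : R) n (f : config n -> R) (eta : config n) : R :=
  \sum_(eta' : config n) Pcol beta eta eta' * f eta'.

Definition Zi (R : realType) (beta : R) n (eta : config n) (i : 'I_n) : R :=
  \sum_(j' : 'I_n.+1) weight beta (update eta i j').

Lemma weight_gt0 (R : realType) (beta : R) n (eta : config n) : 0 < weight beta eta.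
Proof. exact: expR_gt0. Qed.

Lemma Zi_gt0 (R : realType) (beta : R) n (eta : config n) i : 0 < Zi beta eta i.
Proof.
rewrite /Zi (bigD1 ord0) // ltr_wpDr //; last exact: weight_gt0.
by apply: sumr_ge0 => j _; apply/ltW/weight_gt0.
Qed.

Lemma sum_if_eq (R : realType) (T : finType) (u : T) (c : R) (g : T -> R) :
  \sum_(x : T) (if x == u then c else 0) * g x = c * g u.
Proof.
rewrite (bigD1 u) // eqxx big1 /=; first by rewrite addr0.
by move=> x /negbTE ->; rewrite mul0r.
Qed.

Lemma Pop_eq (R : realType) (beta : R) n (f : config n -> R) eta :
  Pop beta f eta = n%:R^-1 * \sum_(i : 'I_n) \sum_(j : 'I_n.+1)
     (weight beta (update eta i j) / Zi beta eta i) * f (update eta i j).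
Proof.
rewrite /Pop /Pcol.
transitivity (n%:R^-1 * \sum_(eta' : config n) \sum_(i : 'I_n) \sum_(j : 'I_n.+1)
   (if eta' == update eta i j then weight beta (update eta i j) /
       \sum_(j' : 'I_n.+1) weight beta (update eta i j') else 0) * f eta').
  rewrite mulr_sumr; apply: eq_bigr => eta' _; rewrite -mulrA; congr (_ * _).
  rewrite mulr_suml; apply: eq_bigr => i _; by rewrite mulr_suml.
congr (_ * _); rewrite exchange_big; apply: eq_bigr => i _.
rewrite exchange_big; apply: eq_bigr => j _.
exact: sum_if_eq.
Qed.

Lemma update_update n (eta : config n) i j k : update (update eta i j) i k = update eta i k.
Proof. by apply/ffunP => x; rewrite !ffunE; case: (x == i). Qed.

Lemma update_id n (eta : config n) i : update eta i (eta i) = eta.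
Proof. by apply/ffunP => x; rewrite !ffunE; case: eqP => // ->. Qed.

Lemma update_at n (eta : config n) i j : update eta i j i = j.
Proof. by rewrite ffunE eqxx. Qed.

Lemma Zi_update (R : realType) (beta : R) n (eta : config n) i j : Zi beta (update eta i j) i = Zi beta eta i.
Proof. by rewrite /Zi; apply: eq_bigr => k _; rewrite update_update. Qed.

Lemma sum_pair (R : realType) (T1 T2 : finType) (G : T1 * T2 -> R) :
  \sum_(p : T1 * T2) G p = \sum_(i : T1) \sum_(j : T2) G (i, j).
Proof. by rewrite pair_big; apply: eq_bigr => -[i j]. Qed.

Lemma swap_i (R : realType) (beta : R) n (f : config n -> R) (i : 'I_n) :
  \sum_(eta : config n) weight beta eta * \sum_(j : 'I_n.+1)
     (weight beta (update eta i j) / Zi beta eta i) * f (update eta i j) =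
  \sum_(eta : config n) weight beta eta * f eta.
Proof.
pose H := fun p : config n * 'I_n.+1 => weight beta p.1 *
   ((weight beta (update p.1 i p.2) / Zi beta p.1 i) * f (update p.1 i p.2)).
pose h := fun p : config n * 'I_n.+1 => (update p.1 i p.2, p.1 i).
have hinv : involutive h.
  by case=> eta j; rewrite /h /= update_update update_id update_at.
transitivity (\sum_(p : config n * 'I_n.+1) H p).
  rewrite sum_pair; apply: eq_bigr => eta _; rewrite mulr_sumr; done.
rewrite (reindex_inj (inv_inj hinv)) sum_pair.
apply: eq_bigr => eta _.
rewrite (eq_bigr (fun j => weight beta (update eta i j) * (weight beta eta / Zi beta eta i * f eta))); last first.
  by move=> j _; rewrite /H /h /= update_update update_id Zi_update.
have -> : \sum_(j : 'I_n.+1) weight beta (update eta i j) *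
   (weight beta eta / Zi beta eta i * f eta) =
   (\sum_(j : 'I_n.+1) weight beta (update eta i j)) * (weight beta eta / Zi beta eta i * f eta).
  by rewrite mulr_suml.
rewrite -/(Zi beta eta i); have := Zi_gt0 beta eta i => hz.
field; exact: lt0r_neq0.
Qed.

Lemma Zt_gt0 (R : realType) (beta : R) n : 0 < \sum_(xi : config n) weight beta xi.
Proof.
have x0 : config n := [ffun => ord0].
rewrite (bigD1 x0) // ltr_wpDr //; last exact: weight_gt0.
by apply: sumr_ge0 => j _; apply/ltW/weight_gt0.
Qed.

Lemma stationary (R : realType) (beta : R) n (f : config n -> R) : (0 < n)%N ->
  \sum_(eta : config n) gibbs beta eta * Pop beta f eta =
  \sum_(eta : config n) gibbs beta eta * f eta.
Proof.
move=> n0; rewrite /gibbs.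
set Zt := \sum_(xi : config n) weight beta xi.
have hZ := Zt_gt0 beta n.
pose L := fun (i : 'I_n) (eta : config n) => \sum_(j : 'I_n.+1)
     (weight beta (update eta i j) / Zi beta eta i) * f (update eta i j).
rewrite (eq_bigr (fun eta => Zt^-1 * n%:R^-1 * \sum_(i : 'I_n) weight beta eta * L i eta)); last first.
  by move=> eta _; rewrite Pop_eq -mulr_sumr; ring.
rewrite -mulr_sumr exchange_big /=.
rewrite (eq_bigr (fun i => \sum_(eta : config n) weight beta eta * f eta)); last first.
  by move=> i _; rewrite /L swap_i.
rewrite sumr_const card_ord.
rewrite [RHS](eq_bigr (fun eta => Zt^-1 * (weight beta eta * f eta))); last first.
  by move=> eta _; ring.
rewrite -mulr_sumr -mulr_natr.
have hn : (n%:R : R) != 0 by rewrite pnatr_eq0 -lt0n.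
field; rewrite hn andbT; exact: lt0r_neq0.
Qed.

Fixpoint iterP (R : realType) (beta : R) n (t : nat) (f : config n -> R) : config n -> R :=
  match t with 0%N => f | t'.+1 => iterP beta t' (Pop beta f) end.

Lemma law_dual (R : realType) (beta : R) n t (x : config n) (f : config n -> R) :
  \sum_(eta : config n) law beta t x eta * f eta = iterP beta t f x.
Proof.
elim: t f => [|t IH] f /=.
  by rewrite sum_if_eq mul1r.
rewrite -IH.
transitivity (\sum_(eta' : config n) \sum_(eta : config n) law beta t x eta * (Pcol beta eta eta' * f eta')).
  by apply: eq_bigr => eta' _; rewrite mulr_suml; apply: eq_bigr => eta _; rewrite mulrA.
rewrite exchange_big; apply: eq_bigr => eta _; by rewrite -mulr_sumr.
Qed.

Lemma stationary_iter (R : realType) (beta : R) n t (f : config n -> R) : (0 < n)%N ->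
  \sum_(eta : config n) gibbs beta eta * iterP beta t f eta =
  \sum_(eta : config n) gibbs beta eta * f eta.
Proof.
move=> n0; elim: t f => [|t IH] f //=.
by rewrite IH stationary.
Qed.

Lemma Loc_avg (R : realType) (beta : R) n (f : config n -> R) (eta : config n) (i : 'I_n) :
  \sum_(j : 'I_n.+1) (weight beta (update eta i j) / Zi beta eta i) * f (update eta i j) =
  avg (expR (- beta)) n (ht eta i) (ht eta i.+2) (fun k => f (update eta i (inord k))).
Proof.
set E := expR (- (beta * Rest R eta i)).
have hE : 0 < E by exact: expR_gt0.
set l := lw (expR (- beta)) (ht eta i) (ht eta i.+2).
set S := \sum_(j : 'I_n.+1) l j.
have hS : 0 < S.
  have := sum_lw_gt0 n (ht eta i) (ht eta i.+2) (expR_gt0 (- beta)).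
  by rewrite big_mkord.
have hw : forall j, weight beta (update eta i j) = E * l j by move=> j; rewrite weight_update.
have hZ : Zi beta eta i = E * S by rewrite /Zi /S mulr_sumr; apply: eq_bigr => j _; rewrite hw.
transitivity (\sum_(j : 'I_n.+1) l j * f (update eta i j) / S).
  apply: eq_bigr => j _; rewrite hw hZ; field; rewrite !gt_eqF //.
rewrite -mulr_suml /avg !big_mkord; congr (_ / _); apply: eq_bigr => j _; by rewrite inord_val.
Qed.

Lemma avg_sub (R : realType) (q : R) n a b (g1 g2 : nat -> R) :
  avg q n a b g1 - avg q n a b g2 = avg q n a b (fun j => g1 j - g2 j).
Proof.
rewrite /avg -mulrBl; congr (_ * _); rewrite -sumrB; apply: eq_bigr => j _; ring.
Qed.

Lemma avg_le (R : realType) (q : R) n a b (h : nat -> R) (M : R) : 0 < q ->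
  (forall j, (j < n.+1)%N -> h j <= M) -> avg q n a b h <= M.
Proof.
move=> q0 hM; rewrite /avg ler_pdivrMr; last exact: sum_lw_gt0.
rewrite mulr_sumr; apply: ler_sum_nat => j /andP[_ hj].
rewrite [M * _]mulrC; apply: ler_wpM2l; first exact/ltW/lw_gt0.
exact: hM.
Qed.

Definition Wc (R : realType) (n k : nat) : R := (k * (n.+1 - k))%:R.

Definition dd (R : realType) n (eta eta' : config n) : R :=
  \sum_(i : 'I_n) Wc R n i.+1 * `|(eta i)%:R - (eta' i)%:R|.

Lemma dd_update_both (R : realType) n (eta eta' : config n) i j :
  dd R (update eta i j) (update eta' i j) = dd R eta eta' - Wc R n i.+1 * `|(eta i)%:R - (eta' i)%:R|.
Proof.
rewrite /dd (bigD1 i) //= [X in _ = X - _](bigD1 i) //= !update_at subrr normr0 mulr0 add0r.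
rewrite addrC addrK; apply: eq_bigr => k hk; rewrite !ffunE (negbTE hk) //.
Qed.

Lemma dd_update_same (R : realType) n (eta : config n) i j j' :
  dd R (update eta i j) (update eta i j') = Wc R n i.+1 * `|(j : nat)%:R - (j' : nat)%:R|.
Proof.
rewrite /dd (bigD1 i) //= !update_at big1 ?addr0 // => k hk.
by rewrite !ffunE (negbTE hk) subrr normr0 mulr0.
Qed.

Lemma shift_sum (R : realType) (F : nat -> R) n : F 0%N = 0 -> F n = 0 ->
  \sum_(0 <= i < n) F i.+1 = \sum_(0 <= i < n) F i.
Proof.
move=> h0 hn.
have e1 : \sum_(0 <= i < n.+1) F i = F 0%N + \sum_(0 <= i < n) F i.+1 by rewrite big_nat_recl.
have e2 : \sum_(0 <= i < n.+1) F i = \sum_(0 <= i < n) F i + F n by rewrite big_nat_recr.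
by rewrite h0 add0r in e1; rewrite hn addr0 in e2; rewrite -e1 e2.
Qed.

Definition dl (R : realType) n (eta eta' : config n) (k : nat) : R := (dst (ht eta k) (ht eta' k))%:R.

Definition Lip (R : realType) n (L : R) (f : config n -> R) : Prop :=
  forall eta eta' : config n, f eta - f eta' <= L * dd R eta eta'.

Lemma dd_nat (R : realType) n (eta eta' : config n) :
  dd R eta eta' = \sum_(0 <= i < n) Wc R n i.+1 * dl R eta eta' i.+1.
Proof.
rewrite /dd big_mkord; apply: eq_bigr => i _.
by rewrite /dl !ht_col norm_nat.
Qed.

Lemma Wc_rec (R : realType) n i : (i < n)%N -> Wc R n i + Wc R n i.+2 = 2 * Wc R n i.+1 - 2.
Proof.
move=> hi; rewrite /Wc.
have e : (i * (n.+1 - i) + i.+2 * (n.+1 - i.+2) + 2 = 2 * (i.+1 * (n.+1 - i.+1)))%N.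
  have [m hm] : exists m, n = (i + 1 + m)%N by exists (n - i - 1)%N; lia.
  subst n.
  have -> : ((i + 1 + m).+1 - i = m.+2)%N by lia.
  have -> : ((i + 1 + m).+1 - i.+2 = m)%N by lia.
  have -> : ((i + 1 + m).+1 - i.+1 = m.+1)%N by lia.
  nia.
have := congr1 (fun x : nat => (x%:R : R)) e; rewrite /= !natrD natrM => h; lra.
Qed.

Lemma Wc_le (R : realType) n i : (i < n)%N -> Wc R n i.+1 <= (n * n)%:R.
Proof. move=> hi; rewrite /Wc ler_nat; apply: leq_mul; lia. Qed.

Lemma Wc_ge0 (R : realType) n i : 0 <= Wc R n i.
Proof. exact: ler0n. Qed.

Lemma dl_ge0 (R : realType) n (eta eta' : config n) k : 0 <= dl R eta eta' k.
Proof. exact: ler0n. Qed.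

Lemma q_bounds (R : realType) (beta : R) : 0 < beta -> 0 < expR (- beta) /\ expR (- beta) < 1.
Proof.
move=> hb; split; first exact: expR_gt0.
by rewrite -expR0 ltr_expR; lra.
Qed.

Lemma term_bound (R : realType) (beta : R) n (L : R) (f : config n -> R) (eta eta' : config n) (i : 'I_n) :
  0 < beta -> 0 <= L -> Lip L f ->
  avg (expR (- beta)) n (ht eta i) (ht eta i.+2) (fun k => f (update eta i (inord k))) -
  avg (expR (- beta)) n (ht eta' i) (ht eta' i.+2) (fun k => f (update eta' i (inord k))) <=
  L * (dd R eta eta' - Wc R n i.+1 * dl R eta eta' i.+1) +
  L * Wc R n i.+1 * (dl R eta eta' i + dl R eta eta' i.+2) / 2.
Proof.
move=> hb L0 Hf.
have [q0 q1] := q_bounds hb.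
set q := expR (- beta).
set g := fun k => f (update eta i (inord k)).
set g' := fun k => f (update eta' i (inord k)).
set a := ht eta i; set b := ht eta i.+2; set a' := ht eta' i; set b' := ht eta' i.+2.
have -> : avg q n a b g - avg q n a' b' g' = (avg q n a b g - avg q n a b g') + (avg q n a b g' - avg q n a' b' g') by ring.
apply: lerD.
  rewrite avg_sub; apply: avg_le => // k hk.
  rewrite /g /g'; have := Hf (update eta i (inord k)) (update eta' i (inord k)).
  by rewrite dd_update_both /dl !ht_col norm_nat.
have hc : 0 <= L * Wc R n i.+1 by apply: mulr_ge0 => //; exact: Wc_ge0.
have := @avg_lip R q n a a' b b' g' (L * Wc R n i.+1) q0 q1 (ht_le _ _) (ht_le _ _) (ht_le _ _) (ht_le _ _) hc.
rewrite /dl; apply.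
move=> k k' hk hk'; rewrite /g'.
have := Hf (update eta' i (inord k)) (update eta' i (inord k')).
by rewrite dd_update_same !inordK // norm_nat mulrA.
Qed.

Lemma contract (R : realType) (beta : R) n (L : R) (f : config n -> R) :
  0 < beta -> (0 < n)%N -> 0 <= L -> Lip L f ->
  Lip (L * (1 - (n%:R ^+ 3)^-1)) (Pop beta f).
Proof.
move=> hb n0 L0 Hf eta eta'.
set q := expR (- beta).
have hP : forall x, Pop beta f x = n%:R^-1 * \sum_(i : 'I_n)
    avg q n (ht x i) (ht x i.+2) (fun k => f (update x i (inord k))).
  by move=> x; rewrite Pop_eq; congr (_ * _); apply: eq_bigr => i _; apply: Loc_avg.
rewrite !hP -mulrBr -sumrB.
set d := dd R eta eta'.
pose RH := fun i : nat => L * (d - Wc R n i.+1 * dl R eta eta' i.+1) +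
  L * Wc R n i.+1 * (dl R eta eta' i + dl R eta eta' i.+2) / 2.
have h1 : \sum_(i : 'I_n) (avg q n (ht eta i) (ht eta i.+2) (fun k => f (update eta i (inord k))) -
    avg q n (ht eta' i) (ht eta' i.+2) (fun k => f (update eta' i (inord k)))) <= \sum_(0 <= i < n) RH i.
  rewrite big_mkord; apply: ler_sum => i _; exact: term_bound.
set S0 := \sum_(0 <= i < n) dl R eta eta' i.+1.
have key : \sum_(0 <= i < n) Wc R n i.+1 * (dl R eta eta' i + dl R eta eta' i.+2) =
           \sum_(0 <= i < n) (2 * Wc R n i.+1 - 2) * dl R eta eta' i.+1.
  rewrite (eq_bigr (fun i => Wc R n i.+1 * dl R eta eta' i + Wc R n i * dl R eta eta' i.+1 +
      (Wc R n i.+1 * dl R eta eta' i.+2 - Wc R n i * dl R eta eta' i.+1))); last by move=> i _; ring.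
  rewrite big_split /= sumrB.
  have e2 : \sum_(0 <= i < n) Wc R n i.+1 * dl R eta eta' i.+2 = \sum_(0 <= i < n) Wc R n i * dl R eta eta' i.+1.
    apply: (shift_sum (F := fun i => Wc R n i * dl R eta eta' i.+1)).
      by rewrite /Wc mul0n mul0r.
    by rewrite /dl !ht_out // /dst mulr0.
  rewrite e2 subrr addr0 big_split /=.
  have e3 : \sum_(0 <= i < n) Wc R n i.+1 * dl R eta eta' i = \sum_(0 <= i < n) Wc R n i.+2 * dl R eta eta' i.+1.
    symmetry; apply: (shift_sum (F := fun i => Wc R n i.+1 * dl R eta eta' i)).
      by rewrite /dl /dst mulr0.
    by rewrite /Wc subnn muln0 mul0r.
  rewrite e3 -big_split /=; apply: eq_big_nat => i /andP[_ hi].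
  rewrite -Wc_rec //; ring.
have hsum : \sum_(0 <= i < n) RH i = n%:R * L * d - L * S0.
  rewrite (eq_bigr (fun i => (L * d - L * dl R eta eta' i.+1) + L / 2 *
     (Wc R n i.+1 * (dl R eta eta' i + dl R eta eta' i.+2) - (2 * Wc R n i.+1 - 2) * dl R eta eta' i.+1)));
     last by move=> i _; rewrite /RH; field; lra.
  have hX : \sum_(0 <= i < n) L / 2 * (Wc R n i.+1 * (dl R eta eta' i + dl R eta eta' i.+2) -
      (2 * Wc R n i.+1 - 2) * dl R eta eta' i.+1) = 0.
    by rewrite -mulr_sumr sumrB key subrr mulr0.
  have hA : \sum_(0 <= i < n) (L * d - L * dl R eta eta' i.+1) = n%:R * L * d - L * S0.
    by rewrite sumrB sumr_const_nat subn0 -mulr_sumr -/S0 -[n%:R * L * d]mulrA mulr_natl.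
  by rewrite big_split /= hX hA addr0.
have hdS : d <= (n * n)%:R * S0.
  rewrite /d dd_nat /S0 mulr_sumr; apply: ler_sum_nat => i /andP[_ hi].
  apply: ler_wpM2r; first exact: dl_ge0.
  exact: Wc_le.
have hn : 0 < (n%:R : R) by rewrite ltr0n.
apply: (le_trans (ler_wpM2l _ h1)); first by rewrite invr_ge0; exact: ltW.
rewrite hsum natrM in hdS *.
rewrite -subr_ge0.
have -> : L * (1 - (n%:R ^+ 3)^-1) * d - n%:R^-1 * (n%:R * L * d - L * S0) =
          L * (n%:R * n%:R * S0 - d) / n%:R ^+ 3.
  by field; rewrite gt_eqF.
apply: divr_ge0; last by apply: exprn_ge0; exact: ltW.
by apply: mulr_ge0 => //; rewrite subr_ge0.
Qed.

Lemma Lip_iter (R : realType) (beta : R) n (L : R) (f : config n -> R) t :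
  0 < beta -> (0 < n)%N -> 0 <= L -> Lip L f ->
  Lip (L * (1 - (n%:R ^+ 3)^-1) ^+ t) (iterP beta t f).
Proof.
move=> hb n0 L0 Hf.
have hk : 0 <= 1 - (n%:R ^+ 3 : R)^-1.
  rewrite subr_ge0 invr_le1 ?exprn_ege1 ?ler1n ?exprn_gt0 ?ltr0n //.
  by rewrite unitfE expf_neq0 // pnatr_eq0 -lt0n.
elim: t f L L0 Hf => [|t IH] f L L0 Hf /=; first by rewrite expr0 mulr1.
rewrite exprS mulrA.
apply: IH; first by apply: mulr_ge0.
exact: contract.
Qed.

Lemma dd_ge0 (R : realType) n (eta eta' : config n) : 0 <= dd R eta eta'.
Proof. by apply: sumr_ge0 => i _; apply: mulr_ge0; [exact: Wc_ge0| exact: normr_ge0]. Qed.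

Lemma dd_ge1 (R : realType) n (eta eta' : config n) : eta != eta' -> 1 <= dd R eta eta'.
Proof.
move=> hne.
case: (pickP (fun i => eta i != eta' i)) => [i hi|hall]; last first.
  have e : eta = eta' by apply/ffunP => i; move: (hall i) => /negbFE/eqP.
  by rewrite e eqxx in hne.
rewrite /dd (bigD1 i) //=.
have h1 : 1 <= Wc R n i.+1 * `|(eta i)%:R - (eta' i)%:R|.
  rewrite norm_nat /Wc -natrM ler1n.
  have : (0 < dst (eta i) (eta' i))%N.
    rewrite /dst; move: hi; rewrite -(inj_eq val_inj) /=; lia.
  have := ltn_ord i; nia.
have h2 : 0 <= \sum_(i0 | i0 != i) Wc R n i0.+1 * `|(eta i0)%:R - (eta' i0)%:R|.
  by apply: sumr_ge0 => k _; apply: mulr_ge0; [exact: Wc_ge0| exact: normr_ge0].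
lra.
Qed.

Lemma dd_le (R : realType) n (eta eta' : config n) : dd R eta eta' <= n%:R ^+ 4.
Proof.
rewrite /dd.
have -> : (n%:R ^+ 4 : R) = \sum_(i : 'I_n) n%:R ^+ 3.
  by rewrite sumr_const card_ord -[RHS]mulr_natl exprS.
apply: ler_sum => i _.
rewrite norm_nat /Wc -natrM -natrX ler_nat.
have h1 := ltn_ord (eta i); have h2 := ltn_ord (eta' i); have h3 := ltn_ord i.
rewrite /dst.
have : ((eta i - eta' i) + (eta' i - eta i) <= n)%N by lia.
have : (i.+1 * (n.+1 - i.+1) <= n * n)%N by apply: leq_mul; lia.
move=> a b; rewrite expnS mulnC; apply: leq_mul => //.
Qed.

Lemma gibbs_ge0 (R : realType) (beta : R) n (eta : config n) : 0 <= gibbs beta eta.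
Proof. by rewrite /gibbs; apply: divr_ge0; [exact/ltW/weight_gt0| exact/ltW/Zt_gt0]. Qed.

Lemma gibbs_sum1 (R : realType) (beta : R) n : \sum_(eta : config n) gibbs beta eta = 1.
Proof.
rewrite /gibbs -mulr_suml mulfV //; exact/lt0r_neq0/Zt_gt0.
Qed.

Lemma tv_bound (R : realType) (beta : R) n t (x : config n) : 0 < beta -> (0 < n)%N ->
  tv_dist (law beta t x) (@gibbs R beta n) <= (1 - (n%:R ^+ 3)^-1) ^+ t * n%:R ^+ 4.
Proof.
move=> hb n0.
set p := law beta t x.
set g := @gibbs R beta n.
pose s := fun eta => if g eta <= p eta then 1 else -1 : R.
have habs : forall eta, `|p eta - g eta| = (p eta - g eta) * s eta.
  move=> eta; rewrite /s; case: ifP => h.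
    by rewrite mulr1 ger0_norm // subr_ge0.
  rewrite mulrN1 ler0_norm //; rewrite subr_le0; apply: ltW; rewrite ltNge h //.
rewrite /tv_dist (eq_bigr _ (fun eta _ => habs eta)).
have e1 : \sum_(eta : config n) (p eta - g eta) * s eta =
    \sum_(y : config n) g y * (iterP beta t s x - iterP beta t s y).
  rewrite (eq_bigr (fun eta => p eta * s eta - g eta * s eta)); last by move=> eta _; ring.
  rewrite sumrB /p law_dual -(stationary_iter beta t s n0).
  rewrite [RHS](eq_bigr (fun y => g y * iterP beta t s x - g y * iterP beta t s y)); last first.
    by move=> y _; ring.
  by rewrite [RHS]sumrB -mulr_suml gibbs_sum1 mul1r.
rewrite e1.
have hk : 0 <= 1 - (n%:R ^+ 3 : R)^-1.
  rewrite subr_ge0 invr_le1 ?exprn_ege1 ?ler1n ?exprn_gt0 ?ltr0n //.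
  by rewrite unitfE expf_neq0 // pnatr_eq0 -lt0n.
have hLs : Lip 2 s.
  move=> eta eta'; case: (eqVneq eta eta') => [->|hne]; first by rewrite subrr; apply: mulr_ge0 => //; exact: dd_ge0.
  have := dd_ge1 R hne; rewrite /s.
  by case: ifP; case: ifP => _ _ h; lra.
have h20 : (0 : R) <= 2 by lra.
have hLi := @Lip_iter R beta n 2 s t hb n0 h20 hLs.
set c := (1 - (n%:R ^+ 3)^-1) ^+ t.
have c0 : 0 <= c by apply: exprn_ge0.
have : \sum_(y : config n) g y * (iterP beta t s x - iterP beta t s y) <=
       \sum_(y : config n) g y * (2 * c * n%:R ^+ 4).
  apply: ler_sum => y _; apply: ler_wpM2l; first exact: gibbs_ge0.
  apply: (le_trans (hLi x y)); apply: ler_wpM2l; first by apply: mulr_ge0 => //; lra.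
  exact: dd_le.
rewrite -mulr_suml gibbs_sum1 mul1r => h.
have : 2^-1 * \sum_(y : config n) g y * (iterP beta t s x - iterP beta t s y) <= 2^-1 * (2 * c * n%:R ^+ 4).
  by apply: ler_wpM2l => //; lra.
move=> h2; apply: (le_trans h2).
have -> : (2^-1 * (2 * c * n%:R ^+ 4) : R) = c * n%:R ^+ 4 by field; lra.
by [].
Qed.

Lemma e_ge2 (R : realType) : 2 <= expR (1 : R).
Proof. have := expR_ge1Dx (1 : R); lra. Qed.

Lemma e_le4 (R : realType) : expR (1 : R) <= 4.
Proof.
have h1 : 1 - 2^-1 <= expR (- 2^-1 : R) by have := expR_ge1Dx (- 2^-1 : R); lra.
have h2 : expR (2^-1 : R) <= 2.
  have hp : expR (2^-1 : R) * expR (- 2^-1) = 1 by rewrite -expRD subrr expR0.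
  have := expR_gt0 (2^-1 : R); nra.
have -> : (1 : R) = 2^-1 + 2^-1 by field; lra.
rewrite expRD; have h0 := expR_gt0 (2^-1 : R); nra.
Qed.

Lemma ln_ge1 (R : realType) n : (4 <= n)%N -> 1 <= ln (n%:R : R).
Proof.
move=> hn.
have hpos : (0 : R) < n%:R by rewrite ltr0n; lia.
rewrite -ler_expR lnK ?posrE //.
apply: (le_trans (e_le4 R)).
have : (4%:R : R) <= n%:R by rewrite ler_nat.
by [].
Qed.

Lemma exp_m2 (R : realType) : expR (-2 : R) <= (2 * expR 1)^-1.
Proof.
rewrite -div1r ler_pdivlMr; last by apply: mulr_gt0; [lra| exact: expR_gt0].
have -> : expR (-2 : R) * (2 * expR 1) = 2 * expR (-1).
  rewrite mulrCA -expRD; congr (_ * _); congr expR; lra.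
have h := e_ge2 R.
have hp : expR (1 : R) * expR (-1) = 1 by rewrite -expRD subrr expR0.
have := expR_gt0 (-1 : R); nra.
Qed.

Lemma exp_ln4 (R : realType) n : (0 < n)%N ->
  expR (- (4 * ln (n%:R : R) + 2)) * (n%:R ^+ 4) = expR (- 2).
Proof.
move=> n0.
have hpos : (0 : R) < n%:R by rewrite ltr0n.
have e4 : expR (- (4 * ln (n%:R : R))) * n%:R ^+ 4 = 1.
  have -> : (- (4 * ln (n%:R : R))) = 4%:R * (- ln (n%:R : R)) by rewrite mulrN.
  rewrite expRM_natl expRN lnK ?posrE // -exprMn mulVf ?expr1n //; exact: lt0r_neq0.
by rewrite opprD expRD mulrAC e4 mul1r.
Qed.

Lemma pow_exp_bound (R : realType) (k : R) t : 0 <= k <= 1 -> (1 - k) ^+ t <= expR (t%:R * - k).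
Proof.
move=> /andP[k0 k1].
rewrite expRM_natl; apply: lerXn2r.
- by rewrite nnegrE subr_ge0.
- by rewrite nnegrE; exact/ltW/expR_gt0.
- by have := expR_ge1Dx (- k); rewrite addrC.
Qed.

Lemma mix_at (R : realType) (beta : R) n : 0 < beta -> (4 <= n)%N ->
  mixed beta n (Num.Def.truncn ((n%:R : R) ^+ 3 * (4 * ln (n%:R : R) + 2))).+1.
Proof.
move=> hb hn xi.
have n0 : (0 < n)%N by lia.
have hpos : (0 : R) < n%:R by rewrite ltr0n.
have hL := ln_ge1 R hn.
have hX0 : 0 <= (n%:R : R) ^+ 3 * (4 * ln (n%:R : R) + 2).
  apply: mulr_ge0; first exact/ltW/exprn_gt0.
  apply: addr_ge0 => //; apply: mulr_ge0 => //; exact: (le_trans ler01 hL).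
move: (Num.Def.truncn _) (truncnS_gt ((n%:R : R) ^+ 3 * (4 * ln (n%:R : R) + 2))) => m hm.
apply: (le_trans (tv_bound m.+1 xi hb n0)).
have hn3 : 0 < (n%:R : R) ^+ 3 by apply: exprn_gt0.
have hk : 0 <= ((n%:R : R) ^+ 3)^-1 <= 1.
  apply/andP; split; first by rewrite invr_ge0; exact: ltW.
  rewrite invr_le1 ?exprn_ege1 ?ler1n ?exprn_gt0 ?ltr0n //.
  by rewrite unitfE expf_neq0 // pnatr_eq0 -lt0n.
have s1 := pow_exp_bound m.+1 hk.
have s3 : expR (m.+1%:R * - ((n%:R : R) ^+ 3)^-1) <= expR (- (4 * ln (n%:R : R) + 2)).
  rewrite ler_expR mulrN lerN2.
  have : (n%:R : R) ^+ 3 * (4 * ln (n%:R : R) + 2) * ((n%:R : R) ^+ 3)^-1 <= m.+1%:R * ((n%:R : R) ^+ 3)^-1.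
    by apply: ler_wpM2r; [rewrite invr_ge0; exact: ltW| exact: ltW].
  by rewrite mulrC mulrA mulVf ?mul1r // gt_eqF.
have hn4 : 0 <= (n%:R : R) ^+ 4 by exact/ltW/exprn_gt0.
apply: (le_trans _ (exp_m2 R)); rewrite -(exp_ln4 R n0).
apply: ler_wpM2r => //.
exact: (le_trans s1 s3).
Qed.

Theorem theorem3p1 (R : realType) (beta : R) (hbeta : 0 < beta) :
  exists (C : R) (N : nat), 0 < C /\
    forall n : nat, (N <= n)%N ->
      exists t : nat, is_mixing_time beta n t /\
        (t%:R <= C * (n%:R ^+ 3 * ln (n%:R : R))).
Proof.
exists 7, 4%N; split; first lra.
move=> n hn.
set X := (n%:R : R) ^+ 3 * (4 * ln (n%:R : R) + 2).
set t0 := (Num.Def.truncn X).+1.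
have hmix : mixed beta n t0 by exact: mix_at.
have exP : exists t, `[< mixed beta n t >] by exists t0; exact: asboolT.
case: (ex_minnP exP) => m hm hmin.
exists m; split.
  split; first exact/asboolP.
  move=> s hs hs'; have := hmin s (asboolT hs'); lia.
have hmt : (m <= t0)%N by apply: hmin; exact: asboolT.
have hL := ln_ge1 R hn.
have hpos : (0 : R) < n%:R by rewrite ltr0n; lia.
have hX0 : 0 <= X by apply: mulr_ge0; [apply: exprn_ge0; lra| lra].
have ht0 : t0%:R <= X + 1.
  rewrite /t0 -natr1 lerD2r; have := truncn_itv hX0; by case/andP.
have hm' : (m%:R : R) <= t0%:R by rewrite ler_nat.
have hn3 : 1 <= (n%:R : R) ^+ 3 by apply: exprn_ege1; rewrite ler1n; lia.
rewrite /X in ht0.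
nra.
Qed.
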